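(* Let $m\ge1$ and let $\mathbf z=(z_1,\dots,z_m)$ be a sequence of non-negative integers with at most one even entry. Then $\rho^{m+1}(\mathbf z)=(z_1+2,\dots,z_m+2)$, where $\rho=\rho_m$ is the right rotation.
   Context: Let $\mathcal Z_m$ be the set of $m$-tuples of integers with at most one even entry. The right rotation $\rho:\mathcal Z_m\to\mathcal Z_m$ is defined by: if $z_2,\dots,z_m$ are all odd, $\rho(z_1,\dots,z_m)=(z_2,\dots,z_m,z_1+1)$; if $z_v$ is even for some $v>1$, $\rho(z_1,\dots,z_m)=(z_2,\dots,z_{v-1},z_1+1,z_{v+1},\dots,z_m,z_v+1)$ (i.e. the entry $z_1+1$ is placed at position $v-1$ and $z_v+1$ at the end). For $m=1$, $\rho(z)=z+1$. *)

(* Defs.v *)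
From Stdlib Require Import ZArith List.
Import ListNotations.
Open Scope Z_scope.

Definition at_most_one_even (z : list Z) : Prop :=
  forall i j : nat, (i < length z)%nat -> (j < length z)%nat ->
    Z.Even (nth i z 0) -> Z.Even (nth j z 0) -> i = j.

(* Auxiliary for rho: scans rest = (z_2,...,z_m) for the first even entry z_v.
   Returns z_2..z_{v-1}, z1+1, z_{v+1}..z_m, z_v+1  if an even entry exists,
   and z_2..z_m, z1+1 otherwise. *)
Fixpoint rho_aux (a : Z) (rest : list Z) : list Z :=
  match rest with
  | [] => [a + 1]
  | x :: r => if Z.even x then (a + 1) :: r ++ [x + 1]
              else x :: rho_aux a r
  end.

Definition rho (z : list Z) : list Z :=
  match z with
  | [] => []
  | z1 :: rest => rho_aux z1 rest
  end.

(* Main.v *)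
Require Import Defs.
From Stdlib Require Import ZArith List Lia.
Import ListNotations.
Open Scope Z_scope.

Definition oddl (l : list Z) := Forall (fun x => Z.even x = false) l.

Lemma rho_aux_odd a W : oddl W -> rho_aux a W = W ++ [a+1].
Proof. induction 1; simpl; auto. rewrite H, IHForall; auto. Qed.

Lemma rho_aux_even a B e Q : oddl B -> Z.even e = true ->
  rho_aux a (B ++ e :: Q) = B ++ (a+1) :: Q ++ [e+1].
Proof. intros HB He; induction HB; simpl. rewrite He; auto. rewrite H, IHHB; auto. Qed.

Lemma even_p1 x : Z.even x = false -> Z.even (x+1) = true.
Proof. intros H. rewrite Z.even_add. rewrite H. reflexivity. Qed.

Lemma odd_map2 P : oddl P -> oddl (map (fun x => x + 2) P).
Proof. induction 1; constructor; auto. rewrite Z.even_add; rewrite H; reflexivity. Qed.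


Lemma L1 P : oddl P -> forall e Q, Z.even e = true -> oddl Q ->
  Nat.iter (S (length P)) rho (P ++ e :: Q) = Q ++ (e+1) :: map (fun x => x + 2) P.
Proof.
  induction 1 as [|a P Ha HP IH]; intros e Q He HQ.
  - simpl. rewrite rho_aux_odd; auto.
  - cbn [length]. rewrite Nat.iter_succ_r. simpl.
    rewrite (rho_aux_even a P e Q HP He).
    rewrite <- Nat.iter_succ. rewrite IH; auto.
    + rewrite <- app_assoc. simpl. f_equal. f_equal. f_equal. lia.
    + apply even_p1; auto.
    + unfold oddl. apply Forall_app; split; auto. constructor; auto.
      rewrite Z.even_add, He; reflexivity.
Qed.

Lemma L1g A : oddl A -> forall p B e Q, Z.even p = false -> oddl B -> Z.even e = true ->
  Nat.iter (S (length A)) rho (A ++ p :: B ++ e :: Q) =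
  B ++ (p+1) :: Q ++ (e+1) :: map (fun x => x + 2) A.
Proof.
  induction 1 as [|a A Ha HA IH]; intros p B e Q Hp HB He.
  - simpl. rewrite rho_aux_even; auto.
  - cbn [length]. rewrite Nat.iter_succ_r. simpl.
    replace (A ++ p :: B ++ e :: Q) with ((A ++ p :: B) ++ e :: Q)
      by (rewrite <- app_assoc; reflexivity).
    rewrite rho_aux_even; auto.
    2:{ unfold oddl; apply Forall_app; split; auto. }
    rewrite <- app_assoc. simpl.
    rewrite <- Nat.iter_succ; rewrite IH; auto.
    + rewrite <- app_assoc. simpl. replace (a+1+1) with (a+2) by lia; reflexivity.
    + apply even_p1; auto.
Qed.

Lemma decomp z : at_most_one_even z ->
  oddl z \/ exists P e Q, z = P ++ e :: Q /\ oddl P /\ Z.even e = true /\ oddl Q.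
Proof.
  induction z as [|a z IH]; intros H.
  - left; constructor.
  - destruct (Z.even a) eqn:Ea.
    + right. exists [], a, z. split; [reflexivity|]. split; [constructor|]. split; [exact Ea|].
      unfold oddl. apply Forall_forall. intros x Hx.
      destruct (Z.even x) eqn:Ex; auto. exfalso.
      destruct (In_nth z x 0 Hx) as [i [Hi Hn]].
      assert (S i = 0%nat); [|discriminate].
      apply H; simpl; try lia; apply Z.even_spec; auto. rewrite Hn; auto.
    + assert (H' : at_most_one_even z).
      { intros i j Hi Hj Ei Ej.
        assert (S i = S j) by (apply H; simpl; auto; lia). lia. }
      destruct (IH H') as [Ho | [P [e [Q [-> [HP [He HQ]]]]]]].
      * left. constructor; auto.
      * right. exists (a :: P), e, Q. repeat split; auto. constructor; auto.
Qed.

Theorem lemma4p4 (m : nat) (z : list Z) :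
  (1 <= m)%nat -> length z = m ->
  (forall x, In x z -> 0 <= x) ->
  at_most_one_even z ->
  Nat.iter (S m) rho z = map (fun x => x + 2) z.
Proof.
  intros Hm Hl _ H.
  destruct (decomp z H) as [Ho | [P [e [Q [-> [HP [He HQ]]]]]]].
  - destruct z as [|a W]; simpl in Hl; [lia|].
    subst m. rewrite Nat.iter_succ_r. simpl.
    inversion Ho; subst.
    rewrite rho_aux_odd; auto.
    rewrite <- Nat.iter_succ; rewrite L1; auto.
    + simpl. f_equal. lia.
    + apply even_p1; auto.
    + constructor.
  - rewrite length_app in Hl; simpl in Hl.
    replace (S m) with (S (length Q) + S (length P))%nat by lia.
    rewrite Nat.iter_add.
    rewrite L1; auto.
    destruct Q as [|c Q'].
    + simpl. rewrite rho_aux_odd.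
      * rewrite map_app. simpl. replace (e+1+1) with (e+2) by lia; reflexivity.
      * apply odd_map2; auto.
    + cbn [length]. rewrite Nat.iter_succ_r. simpl.
      inversion HQ; subst.
      rewrite rho_aux_odd.
      2:{ unfold oddl; apply Forall_app; split; auto. constructor.
          rewrite Z.even_add, He; reflexivity. apply odd_map2; auto. }
      rewrite <- app_assoc. simpl.
      rewrite <- Nat.iter_succ. rewrite (L1g Q' H3 (e+1) (map (fun x => x + 2) P) (c+1) []).
      * rewrite map_app. simpl. replace (e+1+1) with (e+2) by lia; replace (c+1+1) with (c+2) by lia; reflexivity.
      * rewrite Z.even_add, He; reflexivity.
      * apply odd_map2; auto.
      * apply even_p1; auto.
Qed.
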